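(* Let $\mathcal P$ be a Fitting program over a bilattice $\mathcal B$. Then $Fix^{\mathcal U}_{\mathcal U}\le_k Fix^{\mathcal F}_{\mathcal U}$ and $Fix^{\mathcal U}_{\mathcal U}\le_k Fix^{\mathcal T}_{\mathcal U}$.
   Context: A bilattice $\langle\mathcal B,\le_t,\le_k\rangle$ is a nonempty set with two partial orders, each making $\mathcal B$ a lattice with top and bottom. Under $\le_t$, meet and join are $\wedge,\vee$ (infinitary $\bigwedge,\bigvee$), bottom $\mathcal F$, top $\mathcal T$; under $\le_k$, meet and join are $\otimes,\oplus$ (infinitary $\bigotimes,\bigoplus$), bottom $\mathcal U$, top $\mathcal I$. Standing assumptions: $\mathcal B$ is complete for both orders, infinitely distributive, satisfies the infinitary interlacing conditions, and has a negation $\neg$ (an involution reversing $\le_t$ and preserving $\le_k$). A formula is built from literals ($A$ or $\neg A$) and elements of $\mathcal B$ using $\wedge,\vee,\otimes,\oplus,\exists,\forall$ (with built-in predicate $equal$). A clause is $P(x_1,\dots,x_n)\leftarrow\phi(x_1,\dots,x_n)$ with the body's free variables among $x_1,\dots,x_n$. A Fitting program is a finite set of clauses with no predicate letter heading more than one clause; Inst-$\mathcal P$ is its set of ground instances. $\mathcal V(\mathcal B)$: maps from ground atoms to $\mathcal B$ with pointwise orders/operations. Valuations extend to closed formulas compositionally ($v(\beta)=\beta$, connectives pointwise, $\exists$ as $\bigvee$, $\forall$ as $\bigwedge$ over closed-term instances, $v(equal(s,t))=\mathcal T$ if $s=t$ else $\mathcal F$). The contrajoin $v\bigtriangleup w$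 evaluates likewise but gives $A$ the value $v(A)$ and $\neg A$ the value $\neg w(A)$. For $\alpha\in\{\mathcal F,\mathcal T,\mathcal U,\mathcal I\}$: $\Psi_{\mathcal P}^{\alpha}(v,w)(A)=\alpha$ if $A$ heads no member of Inst-$\mathcal P$, and $=(v\bigtriangleup w)(B)$ if $A\leftarrow B\in$ Inst-$\mathcal P$. $\Psi'^{\alpha}_{\mathcal P}(v)$ is the $\le_t$-least (resp. $\le_t$-greatest, $\le_k$-least, $\le_k$-greatest) fixpoint of $x\mapsto\Psi_{\mathcal P}^{\alpha}(x,v)$ when $\alpha=\mathcal F$ (resp. $\mathcal T,\mathcal U,\mathcal I$), obtained as the limit of the transfinite iteration from the constant valuation $\alpha$. $Fix^{\alpha}_{\mathcal U}$ denotes the $\le_k$-least fixpoint of $\Psi'^{\alpha}_{\mathcal P}$. *)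

(* Defs.v *)
From Stdlib Require Import List Arith ClassicalEpsilon.
Import ListNotations.
Set Implicit Arguments.
Unset Strict Implicit.

Inductive bop := Tmeet | Tjoin | Kmeet | Kjoin.
Inductive border := OrdT | OrdK.

Record Bilattice := {
  car :> Type;
  le_t : car -> car -> Prop;
  le_k : car -> car -> Prop;
  bigTmeet : forall I : Type, (I -> car) -> car;
  bigTjoin : forall I : Type, (I -> car) -> car;
  bigKmeet : forall I : Type, (I -> car) -> car;
  bigKjoin : forall I : Type, (I -> car) -> car;
  neg : car -> car
}.

Definition big (B : Bilattice) (o : bop) : forall I : Type, (I -> B) -> B :=
  match o with
  | Tmeet => @bigTmeet B | Tjoin => @bigTjoin B
  | Kmeet => @bigKmeet B | Kjoin => @bigKjoin B
  end.

Definition bin (B : Bilattice) (o : bop) (a b : B) : B :=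
  big o (fun x : bool => if x then a else b).

Definition le_of (B : Bilattice) (r : border) : B -> B -> Prop :=
  match r with OrdT => @le_t B | OrdK => @le_k B end.

Definition bF (B : Bilattice) : B := bigTjoin (fun e : Empty_set => match e with end).
Definition bT (B : Bilattice) : B := bigTmeet (fun e : Empty_set => match e with end).
Definition bU (B : Bilattice) : B := bigKjoin (fun e : Empty_set => match e with end).
Definition bI (B : Bilattice) : B := bigKmeet (fun e : Empty_set => match e with end).

Definition partial_order (X : Type) (le : X -> X -> Prop) : Prop :=
  (forall x, le x x) /\ (forall x y z, le x y -> le y z -> le x z) /\
  (forall x y, le x y -> le y x -> x = y).

Definition is_glb (X : Type) (le : X -> X -> Prop) (I : Type) (f : I -> X) (m : X) :=
  (forall i, le m (f i)) /\ (forall y, (forall i, le y (f i)) -> le y m).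
Definition is_lub (X : Type) (le : X -> X -> Prop) (I : Type) (f : I -> X) (m : X) :=
  (forall i, le (f i) m) /\ (forall y, (forall i, le (f i) y) -> le m y).

Definition bilattice_axioms (B : Bilattice) : Prop :=
  partial_order (@le_t B) /\ partial_order (@le_k B) /\
  (forall (I : Type) (f : I -> B), is_glb (@le_t B) f (bigTmeet f)) /\
  (forall (I : Type) (f : I -> B), is_lub (@le_t B) f (bigTjoin f)) /\
  (forall (I : Type) (f : I -> B), is_glb (@le_k B) f (bigKmeet f)) /\
  (forall (I : Type) (f : I -> B), is_lub (@le_k B) f (bigKjoin f)) /\
  (forall (o1 o2 : bop) (a : B) (I : Type) (f : I -> B), inhabited I ->
      bin o1 a (big o2 f) = big o2 (fun i => bin o1 a (f i))) /\
  (forall (o : bop) (r : border) (I : Type) (f g : I -> B),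
      (forall i, le_of r (f i) (g i)) -> le_of r (big o f) (big o g)) /\
  (forall a : B, neg (neg a) = a) /\
  (forall a b : B, le_t a b -> le_t (neg b) (neg a)) /\
  (forall a b : B, le_k a b -> le_k (neg a) (neg b)).

Record Signature := {
  Fn : Type;
  farity : Fn -> nat;
  Pr : Type;           (* predicate letters (other than the built-in equal) *)
  parity : Pr -> nat
}.

Inductive term (S : Signature) : Type :=
| Var : nat -> term S
| App : Fn S -> list (term S) -> term S.
Arguments Var {S} _.
Arguments App {S} _ _.

Inductive wft (S : Signature) : term S -> Prop :=
| wft_var : forall x, wft (Var x)
| wft_app : forall f ts, length ts = farity f -> Forall (@wft S) ts -> wft (App f ts).

Inductive cterm (S : Signature) : term S -> Prop :=
| cterm_app : forall f ts, length ts = farity f -> Forall (@cterm S) ts -> cterm (App f ts).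

Definition HU (S : Signature) := { t : term S | cterm t }.

Definition gatom (S : Signature) :=
  { p : Pr S * list (term S) | length (snd p) = parity (fst p) /\ Forall (@cterm S) (snd p) }.

Fixpoint tsubst (S : Signature) (e : nat -> term S) (t : term S) : term S :=
  match t with
  | Var x => e x
  | App f ts => App f (map (tsubst e) ts)
  end.

Definition upd (S : Signature) (e : nat -> term S) (x : nat) (t : term S) : nat -> term S :=
  fun y => if Nat.eqb y x then t else e y.

(* formulas; the boolean in FAtom/FEq is the sign of the literal
   (true: A, false: ~A) *)
Inductive formula (S : Signature) (C : Type) : Type :=
| FAtom : bool -> Pr S -> list (term S) -> formula S C
| FEq : bool -> term S -> term S -> formula S C
| FConst : C -> formula S C
| FAnd : formula S C -> formula S C -> formula S C
| FOr : formula S C -> formula S C -> formula S C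
| FOtimes : formula S C -> formula S C -> formula S C
| FOplus : formula S C -> formula S C -> formula S C
| FEx : nat -> formula S C -> formula S C
| FAll : nat -> formula S C -> formula S C.
Arguments FAtom {S C} _ _ _.
Arguments FEq {S C} _ _ _.
Arguments FConst {S C} _.
Arguments FAnd {S C} _ _.
Arguments FOr {S C} _ _.
Arguments FOtimes {S C} _ _.
Arguments FOplus {S C} _ _.
Arguments FEx {S C} _ _.
Arguments FAll {S C} _ _.

Fixpoint tvars_in (S : Signature) (ok : nat -> Prop) (t : term S) : Prop :=
  match t with
  | Var x => ok x
  | App _ ts => (fix go (l : list (term S)) : Prop :=
                   match l with nil => True | t :: l => tvars_in ok t /\ go l end) ts
  end.

Fixpoint fv_in (S : Signature) (C : Type) (ok : nat -> Prop) (phi : formula S C) : Prop :=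
  match phi with
  | FAtom _ _ ts => Forall (tvars_in ok) ts
  | FEq _ t1 t2 => tvars_in ok t1 /\ tvars_in ok t2
  | FConst _ => True
  | FAnd p q | FOr p q | FOtimes p q | FOplus p q => fv_in ok p /\ fv_in ok q
  | FEx x p | FAll x p => fv_in (fun y => y = x \/ ok y) p
  end.

Fixpoint wf_formula (S : Signature) (C : Type) (phi : formula S C) : Prop :=
  match phi with
  | FAtom _ P ts => length ts = parity P /\ Forall (@wft S) ts
  | FEq _ t1 t2 => wft t1 /\ wft t2
  | FConst _ => True
  | FAnd p q | FOr p q | FOtimes p q | FOplus p q => wf_formula p /\ wf_formula q
  | FEx _ p | FAll _ p => wf_formula p
  end.

Definition valuation (B : Bilattice) (S : Signature) := gatom S -> B.

Definition vle (B : Bilattice) (S : Signature) (r : border) (v w : valuation B S) : Prop :=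
  forall A, le_of r (v A) (w A).

(* value of the atom P(ts) under v (ts closed); junk value U if P(ts) is
   not a ground atom, which never happens for well-formed programs *)
Definition look (B : Bilattice) (S : Signature) (v : valuation B S)
    (P : Pr S) (ts : list (term S)) : B :=
  match excluded_middle_informative
          (length ts = parity P /\ Forall (@cterm S) ts) with
  | left h => v (exist _ (P, ts) h)
  | right _ => bU B
  end.

(* (v contrajoin w)(phi[e]) : positive literals A get v(A), negative ones
   ~A get ~w(A); the ordinary valuation v(phi) is contrajoin v v. *)
Fixpoint contrajoin (B : Bilattice) (S : Signature) (v w : valuation B S)
    (e : nat -> term S) (phi : formula S B) : B :=
  match phi with
  | FAtom true P ts => look v P (map (tsubst e) ts)
  | FAtom false P ts => neg (look w P (map (tsubst e) ts))
  | FEq s t1 t2 =>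
      let b := if excluded_middle_informative (tsubst e t1 = tsubst e t2)
               then bT B else bF B in
      if s then b else neg b
  | FConst c => c
  | FAnd p q => bin Tmeet (contrajoin v w e p) (contrajoin v w e q)
  | FOr p q => bin Tjoin (contrajoin v w e p) (contrajoin v w e q)
  | FOtimes p q => bin Kmeet (contrajoin v w e p) (contrajoin v w e q)
  | FOplus p q => bin Kjoin (contrajoin v w e p) (contrajoin v w e q)
  | FEx x p => bigTjoin (fun t : HU S => contrajoin v w (upd e x (proj1_sig t)) p)
  | FAll x p => bigTmeet (fun t : HU S => contrajoin v w (upd e x (proj1_sig t)) p)
  end.

(* clause  P(x1,...,xn) <- phi(x1,...,xn) *)
Record clause (B : Bilattice) (S : Signature) := {
  chead : Pr S;
  cvars : list nat;
  cbody : formula S B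
}.

Definition wf_clause (B : Bilattice) (S : Signature) (c : clause B S) : Prop :=
  NoDup (cvars c) /\ length (cvars c) = parity (chead c) /\
  wf_formula (cbody c) /\ fv_in (fun y => In y (cvars c)) (cbody c).

Definition fitting_program (B : Bilattice) (S : Signature) (prog : list (clause B S)) : Prop :=
  Forall (@wf_clause B S) prog /\ NoDup (map (@chead B S) prog).

Fixpoint find_clause (B : Bilattice) (S : Signature) (prog : list (clause B S)) (P : Pr S)
    : option (clause B S) :=
  match prog with
  | nil => None
  | c :: prog' =>
      if excluded_middle_informative (chead c = P) then Some c else find_clause prog' P
  end.

Fixpoint bind (S : Signature) (xs : list nat) (ts : list (term S)) (y : nat) : term S :=
  match xs, ts with
  | x :: xs', t :: ts' => if Nat.eqb y x then t else bind xs' ts' y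
  | _, _ => Var y
  end.

Inductive alpha := aF | aT | aU | aI.

Definition alpha_val (B : Bilattice) (a : alpha) : B :=
  match a with aF => bF B | aT => bT B | aU => bU B | aI => bI B end.

Definition Psi (B : Bilattice) (S : Signature) (prog : list (clause B S)) (a : alpha)
    (v w : valuation B S) : valuation B S :=
  fun A =>
    match find_clause prog (fst (proj1_sig A)) with
    | Some c => contrajoin v w (bind (cvars c) (snd (proj1_sig A))) (cbody c)
    | None => alpha_val B a
    end.

Definition is_fix (B : Bilattice) (S : Signature) (f : valuation B S -> valuation B S)
    (x : valuation B S) : Prop := forall A, f x A = x A.

Definition Psi'_is (B : Bilattice) (S : Signature) (prog : list (clause B S)) (a : alpha)
    (v x : valuation B S) : Prop :=
  let f := fun y => Psi prog a y v in
  is_fix f x /\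
  forall y, is_fix f y ->
    match a with
    | aF => vle OrdT x y
    | aT => vle OrdT y x
    | aU => vle OrdK x y
    | aI => vle OrdK y x
    end.

Definition Fix_U (B : Bilattice) (S : Signature) (prog : list (clause B S)) (a : alpha)
    (z : valuation B S) : Prop :=
  Psi'_is prog a z z /\ forall v, Psi'_is prog a v v -> vle OrdK z v.

(* Main.v *)
Require Import Defs.
From Stdlib Require Import List FunctionalExtensionality ClassicalEpsilon.
Section LFP.
Variable X : Type.
Variable le : X -> X -> Prop.
Hypothesis le_refl : forall x, le x x.
Hypothesis le_trans : forall x y z, le x y -> le y z -> le x z.
Hypothesis le_antisym : forall x y, le x y -> le y x -> x = y.
Variable join : forall {I : Type}, (I -> X) -> X.
Hypothesis join_ub : forall I (g : I -> X) i, le (g i) (join g).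
Hypothesis join_least : forall I (g : I -> X) y, (forall i, le (g i) y) -> le (join g) y.

Definition closed (f : X -> X) (D : X -> Prop) :=
  (forall y, D y -> D (f y)) /\ (forall I (g : I -> X), (forall i, D (g i)) -> D (join g)).
Definition Cl f x := forall D, closed f D -> D x.
Definition lfp f := join (fun p : {x | Cl f x} => proj1_sig p).

Lemma Cl_closed f : closed f (Cl f).
Proof.
  split.
  - intros y Hy D HD. apply (proj1 HD). apply Hy; auto.
  - intros I g Hg D HD. apply (proj2 HD). intro i. apply Hg; auto.
Qed.

Lemma lfp_Cl f : Cl f (lfp f).
Proof. apply (proj2 (Cl_closed f)). intros [x Hx]; exact Hx. Qed.

Lemma lfp_least f (fmono : forall a b, le a b -> le (f a) (f b)) p : le (f p) p -> le (lfp f) p.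
Proof.
  intro Hp. apply (lfp_Cl f (fun y => le y p)). split.
  - intros y Hy. eapply le_trans; [apply fmono, Hy|exact Hp].
  - intros I g Hg. apply join_least; auto.
Qed.

Lemma lfp_fix f (fmono : forall a b, le a b -> le (f a) (f b)) : lfp f = f (lfp f).
Proof.
  apply le_antisym.
  - apply (lfp_Cl f (fun y => le y (f y))). split.
    + intros y Hy. apply fmono, Hy.
    + intros I g Hg. apply join_least. intro i.
      eapply le_trans; [apply Hg|]. apply fmono, join_ub.
  - assert (H : Cl f (f (lfp f))) by (apply (proj1 (Cl_closed f)), lfp_Cl).
    exact (join_ub _ (fun p : {x | Cl f x} => proj1_sig p) (exist _ _ H)).
Qed.

Section Two.
Variable f : X -> X.
Hypothesis fmono : forall a b, le a b -> le (f a) (f b).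
Variable le2 : X -> X -> Prop.
Hypothesis le2_refl : forall x, le2 x x.
Hypothesis le2_trans : forall x y z, le2 x y -> le2 y z -> le2 x z.
Hypothesis join_mono2 : forall I (a b : I -> X), (forall i, le2 (a i) (b i)) -> le2 (join a) (join b).
Variable g : X -> X.
Hypothesis gmono : forall a b, le a b -> le (g a) (g b).
Hypothesis fmono2 : forall a b, le2 a b -> le2 (f a) (f b).
Hypothesis fg : forall a, le2 (f a) (g a).

Definition closed2 (D : X -> X -> Prop) :=
  (forall y y', D y y' -> D (f y) (g y')) /\
  (forall I (a b : I -> X), (forall i, D (a i) (b i)) -> D (join a) (join b)).
Definition Cl2 y y' := forall D, closed2 D -> D y y'.

Lemma lfp_mono2 : le2 (lfp f) (lfp g).
Proof.
  set (T := {q : X * X | Cl2 (fst q) (snd q)}).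
  set (Y := join (fun p : T => fst (proj1_sig p))).
  set (Y' := join (fun p : T => snd (proj1_sig p))).
  assert (C2 : closed2 Cl2).
  { split.
    - intros y y' H D HD. apply (proj1 HD). apply H; auto.
    - intros I a b H D HD. apply (proj2 HD). intro i. apply H; auto. }
  assert (HY : Cl2 Y Y').
  { apply (proj2 C2). intros [[y y'] H]; exact H. }
  assert (HfY : Cl2 (f Y) (g Y')) by (apply (proj1 C2), HY).
  assert (E1 : le (f Y) Y) by exact (join_ub _ (fun p : T => fst (proj1_sig p)) (exist _ (f Y, g Y') HfY)).
  assert (E2 : le (g Y') Y') by exact (join_ub _ (fun p : T => snd (proj1_sig p)) (exist _ (f Y, g Y') HfY)).
  assert (Hb : forall y y', Cl2 y y' -> le y (lfp f) /\ le y' (lfp g)).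
  { intros y y' H. apply H. split.
    - intros a b [Ha Hb]. split.
      + rewrite (lfp_fix f fmono). apply fmono, Ha.
      + rewrite (lfp_fix g gmono). apply gmono, Hb.
    - intros I a b H'. split; apply join_least; intro i; apply H'. }
  assert (EY : Y = lfp f).
  { apply le_antisym.
    - apply join_least. intros [[y y'] H]. apply (Hb _ _ H).
    - apply (lfp_least f fmono); exact E1. }
  assert (EY' : Y' = lfp g).
  { apply le_antisym.
    - apply join_least. intros [[y y'] H]. apply (Hb _ _ H).
    - apply (lfp_least g gmono); exact E2. }
  rewrite <- EY, <- EY'. apply HY. split.
  - intros y y' H. eapply le2_trans; [apply fmono2, H|apply fg].
  - exact join_mono2.
Qed.
End Two.
End LFP.

Section Main.
Variables (B : Bilattice) (S : Signature) (prog : list (clause B S)).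
Hypothesis HB : bilattice_axioms B.

Definition V := valuation B S.

Lemma leo_refl r (a : B) : le_of r a a.
Proof. destruct HB as [[r1 _] [[r2 _] _]]; destruct r; simpl; auto. Qed.
Lemma leo_trans r (a b c : B) : le_of r a b -> le_of r b c -> le_of r a c.
Proof. destruct HB as [[_ [r1 _]] [[_ [r2 _]] _]]; destruct r; simpl; eauto. Qed.
Lemma leo_antisym r (a b : B) : le_of r a b -> le_of r b a -> a = b.
Proof. destruct HB as [[_ [_ r1]] [[_ [_ r2]] _]]; destruct r; simpl; eauto. Qed.
Lemma big_mono o r I (f g : I -> B) :
  (forall i, le_of r (f i) (g i)) -> le_of r (big o f) (big o g).
Proof. destruct HB as [_ [_ [_ [_ [_ [_ [_ [h _]]]]]]]]. apply h. Qed.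
Lemma bin_mono o r (a b c d : B) : le_of r a c -> le_of r b d -> le_of r (bin o a b) (bin o c d).
Proof. intros H1 H2. unfold bin. apply big_mono. intros []; auto. Qed.
Lemma negk (a b : B) : le_k a b -> le_k (neg a) (neg b).
Proof. destruct HB as [_ [_ [_ [_ [_ [_ [_ [_ [_ [_ h]]]]]]]]]]. apply h. Qed.
Lemma negt (a b : B) : le_t a b -> le_t (neg b) (neg a).
Proof. destruct HB as [_ [_ [_ [_ [_ [_ [_ [_ [_ [h _]]]]]]]]]]. apply h. Qed.

Lemma look_mono r (v v' : V) P ts : vle r v v' -> le_of r (look v P ts) (look v' P ts).
Proof. intro H. unfold look. destruct excluded_middle_informative; [apply H|apply leo_refl]. Qed.

Lemma cj_mono_k (v v' w w' : V) e phi : vle OrdK v v' -> vle OrdK w w' ->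
  le_of OrdK (contrajoin v w e phi) (contrajoin v' w' e phi).
Proof.
  intros Hv Hw. revert e. induction phi; intro e; cbn [contrajoin].
  - destruct b; cbn iota. apply (look_mono OrdK); auto. apply negk. apply (look_mono OrdK); auto.
  - apply (leo_refl OrdK).
  - apply (leo_refl OrdK).
  - apply bin_mono; auto.
  - apply bin_mono; auto.
  - apply bin_mono; auto.
  - apply bin_mono; auto.
  - apply (big_mono Tjoin OrdK). intro; apply IHphi.
  - apply (big_mono Tmeet OrdK). intro; apply IHphi.
Qed.

Lemma cj_mono_t (v v' w : V) e phi : vle OrdT v v' ->
  le_of OrdT (contrajoin v w e phi) (contrajoin v' w e phi).
Proof.
  intros Hv. revert e. induction phi; intro e; cbn [contrajoin].
  - destruct b; cbn iota. apply (look_mono OrdT); auto. apply (leo_refl OrdT).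
  - apply (leo_refl OrdT).
  - apply (leo_refl OrdT).
  - apply bin_mono; auto.
  - apply bin_mono; auto.
  - apply bin_mono; auto.
  - apply bin_mono; auto.
  - apply (big_mono Tjoin OrdT). intro; apply IHphi.
  - apply (big_mono Tmeet OrdT). intro; apply IHphi.
Qed.

Lemma Psi_mono_k a (y y' v v' : V) : vle OrdK y y' -> vle OrdK v v' ->
  vle OrdK (Psi prog a y v) (Psi prog a y' v').
Proof. intros H1 H2 A. unfold Psi. destruct find_clause. apply cj_mono_k; auto. apply (leo_refl OrdK). Qed.

Lemma Psi_mono_t a (y y' v : V) : vle OrdT y y' -> vle OrdT (Psi prog a y v) (Psi prog a y' v).
Proof. intros H1 A. unfold Psi. destruct find_clause. apply cj_mono_t; auto. apply (leo_refl OrdT). Qed.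

Lemma Psi_UF (y v : V) : vle OrdK (Psi prog aU y v) (Psi prog aF y v).
Proof.
  intros A. unfold Psi. destruct find_clause. apply (leo_refl OrdK).
  simpl. destruct HB as [_ [_ [_ [_ [_ [h _]]]]]]. unfold bU.
  apply (h Empty_set (fun e : Empty_set => match e with end)). intros [].
Qed.
Lemma Psi_UT (y v : V) : vle OrdK (Psi prog aU y v) (Psi prog aT y v).
Proof.
  intros A. unfold Psi. destruct find_clause. apply (leo_refl OrdK).
  simpl. destruct HB as [_ [_ [_ [_ [_ [h _]]]]]]. unfold bU.
  apply (h Empty_set (fun e : Empty_set => match e with end)). intros [].
Qed.

Lemma vle_refl r (x : V) : vle r x x.
Proof. intro; apply leo_refl. Qed.
Lemma vle_trans r (x y z : V) : vle r x y -> vle r y z -> vle r x z.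
Proof. intros H1 H2 A; eapply leo_trans; eauto. Qed.
Lemma vle_antisym r (x y : V) : vle r x y -> vle r y x -> x = y.
Proof. intros H1 H2; extensionality A; eapply leo_antisym; eauto. Qed.

Definition vjoin (o : bop) (I : Type) (g : I -> V) : V := fun A => big o (fun i => g i A).

Definition dleT (x y : V) := vle OrdT y x.

Lemma dleT_trans x y z : dleT x y -> dleT y z -> dleT x z.
Proof. unfold dleT; intros; eapply vle_trans; eauto. Qed.
Lemma dleT_antisym x y : dleT x y -> dleT y x -> x = y.
Proof. unfold dleT; intros; eapply vle_antisym; eauto. Qed.

Lemma ubT I (g : I -> V) i : vle OrdT (g i) (vjoin Tjoin _ g).
Proof. intro A. destruct HB as [_ [_ [_ [h _]]]]. apply (proj1 (h I (fun i => g i A))). Qed.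
Lemma lubT I (g : I -> V) y : (forall i, vle OrdT (g i) y) -> vle OrdT (vjoin Tjoin _ g) y.
Proof. intros H A. destruct HB as [_ [_ [_ [h _]]]]. apply (proj2 (h I (fun i => g i A))). intro; apply H. Qed.
Lemma ubK I (g : I -> V) i : vle OrdK (g i) (vjoin Kjoin _ g).
Proof. intro A. destruct HB as [_ [_ [_ [_ [_ [h _]]]]]]. apply (proj1 (h I (fun i => g i A))). Qed.
Lemma lubK I (g : I -> V) y : (forall i, vle OrdK (g i) y) -> vle OrdK (vjoin Kjoin _ g) y.
Proof. intros H A. destruct HB as [_ [_ [_ [_ [_ [h _]]]]]]. apply (proj2 (h I (fun i => g i A))). intro; apply H. Qed.
Lemma ubD I (g : I -> V) i : dleT (g i) (vjoin Tmeet _ g).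
Proof. intro A. destruct HB as [_ [_ [h _]]]. apply (proj1 (h I (fun i => g i A))). Qed.
Lemma lubD I (g : I -> V) y : (forall i, dleT (g i) y) -> dleT (vjoin Tmeet _ g) y.
Proof. intros H A. destruct HB as [_ [_ [h _]]]. apply (proj2 (h I (fun i => g i A))). intro; apply H. Qed.
Lemma vjoin_monoK o I (a b : I -> V) : (forall i, vle OrdK (a i) (b i)) -> vle OrdK (vjoin o _ a) (vjoin o _ b).
Proof. intros H A. apply big_mono. intro; apply H. Qed.

Definition P' (al : alpha) (v : V) : V :=
  match al with
  | aF => lfp V (vjoin Tjoin) (fun y => Psi prog aF y v)
  | aT => lfp V (vjoin Tmeet) (fun y => Psi prog aT y v)
  | _ => lfp V (vjoin Kjoin) (fun y => Psi prog al y v)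
  end.

Lemma P'_spec al v : al <> aI -> Psi'_is prog al v (P' al v).
Proof.
  intro Hal. destruct al; simpl.
  - set (f := fun y => Psi prog aF y v).
    assert (fm : forall a b, vle OrdT a b -> vle OrdT (f a) (f b)) by (intros; apply Psi_mono_t; auto).
    split.
    + intro A. symmetry. exact (f_equal (fun z => z A) (lfp_fix V _ (@vle_trans OrdT) (@vle_antisym OrdT) _ ubT lubT f fm)).
    + intros y Hy. apply (lfp_least V _ (@vle_trans OrdT) _ lubT f fm).
      unfold dleT, f in *; intro A; cbv beta in Hy |- *; rewrite Hy; apply leo_refl.
  - set (f := fun y => Psi prog aT y v).
    assert (fm : forall a b, dleT a b -> dleT (f a) (f b)) by (intros; apply Psi_mono_t; auto).
    split.
    + intro A. symmetry. exact (f_equal (fun z => z A) (lfp_fix V _ dleT_trans dleT_antisym _ ubD lubD f fm)).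
    + intros y Hy. apply (lfp_least V _ dleT_trans _ lubD f fm).
      unfold dleT, f in *; intro A; cbv beta in Hy |- *; rewrite Hy; apply leo_refl.
  - set (f := fun y => Psi prog aU y v).
    assert (fm : forall a b, vle OrdK a b -> vle OrdK (f a) (f b)) by (intros; apply Psi_mono_k; auto using vle_refl).
    split.
    + intro A. symmetry. exact (f_equal (fun z => z A) (lfp_fix V _ (@vle_trans OrdK) (@vle_antisym OrdK) _ ubK lubK f fm)).
    + intros y Hy. apply (lfp_least V _ (@vle_trans OrdK) _ lubK f fm).
      unfold dleT, f in *; intro A; cbv beta in Hy |- *; rewrite Hy; apply leo_refl.
  - congruence.
Qed.

Lemma P'_unique al v x : al <> aI -> Psi'_is prog al v x -> x = P' al v.
Proof.
  intros Hal [Hx1 Hx2]. destruct (P'_spec al v Hal) as [Hp1 Hp2].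
  specialize (Hx2 _ Hp1). specialize (Hp2 _ Hx1).
  destruct al; try congruence; eapply vle_antisym; eauto.
Qed.

Lemma P'_mono al v v' : al <> aI -> vle OrdK v v' -> vle OrdK (P' al v) (P' al v').
Proof.
  intros Hal Hv. destruct al; simpl.
  - apply (lfp_mono2 V _ (@vle_trans OrdT) (@vle_antisym OrdT) _ ubT lubT _
      (fun a b h => Psi_mono_t aF a b v h) _ (@vle_trans OrdK) (vjoin_monoK Tjoin) _
      (fun a b h => Psi_mono_t aF a b v' h)).
    + intros a b h. apply Psi_mono_k; auto using vle_refl.
    + intros a. apply Psi_mono_k; auto using vle_refl.
  - apply (lfp_mono2 V _ dleT_trans dleT_antisym _ ubD lubD _
      (fun a b h => Psi_mono_t aT b a v h) _ (@vle_trans OrdK) (vjoin_monoK Tmeet) _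
      (fun a b h => Psi_mono_t aT b a v' h)).
    + intros a b h. apply Psi_mono_k; auto using vle_refl.
    + intros a. apply Psi_mono_k; auto using vle_refl.
  - apply (lfp_mono2 V _ (@vle_trans OrdK) (@vle_antisym OrdK) _ ubK lubK _
      (fun a b h => Psi_mono_k aU a b v v h (vle_refl OrdK v)) _ (@vle_trans OrdK) (vjoin_monoK Kjoin) _
      (fun a b h => Psi_mono_k aU a b v' v' h (vle_refl OrdK v'))).
    + intros a b h. apply Psi_mono_k; auto using vle_refl.
    + intros a. apply Psi_mono_k; auto using vle_refl.
  - congruence.
Qed.

Definition Z al := lfp V (vjoin Kjoin) (P' al).

Lemma Z_fix al : al <> aI -> Z al = P' al (Z al).
Proof. intro H. apply (lfp_fix V _ (@vle_trans OrdK) (@vle_antisym OrdK) _ ubK lubK). intros; apply P'_mono; auto. Qed.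

Lemma Z_least al p : al <> aI -> vle OrdK (P' al p) p -> vle OrdK (Z al) p.
Proof. intro H. apply (lfp_least V _ (@vle_trans OrdK) _ lubK). intros; apply P'_mono; auto. Qed.

Lemma Z_spec al : al <> aI -> Fix_U prog al (Z al).
Proof.
  intro H. split.
  - pattern (Z al) at 2. rewrite (Z_fix al H). apply P'_spec; auto.
  - intros v Hv. apply Z_least; auto. rewrite <- (P'_unique al v v H Hv). apply vle_refl.
Qed.


Lemma Z_cmp al : al <> aI -> (forall y v, vle OrdK (Psi prog aU y v) (Psi prog al y v)) ->
  vle OrdK (Z aU) (Z al).
Proof.
  intros H Hc. apply Z_least; [congruence|]. simpl.
  destruct (Z_spec al H) as [[Hf _] _].
  apply (lfp_least V _ (@vle_trans OrdK) _ lubK).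
  - intros; apply Psi_mono_k; auto using vle_refl.
  - intro A. eapply leo_trans; [apply Hc|]. rewrite (Hf A). apply leo_refl.
Qed.

Theorem theorem5_sec (HP : fitting_program prog) :
  exists zU zF zT : valuation B S,
    Fix_U prog aU zU /\ Fix_U prog aF zF /\ Fix_U prog aT zT /\
    vle OrdK zU zF /\ vle OrdK zU zT.
Proof.
  exists (Z aU), (Z aF), (Z aT).
  repeat split; try (apply Z_spec; discriminate); try (apply Z_spec; discriminate).
  - apply Z_cmp; [discriminate|apply Psi_UF].
  - apply Z_cmp; [discriminate|apply Psi_UT].
Qed.
End Main.

Theorem theorem5 (B : Bilattice) (S : Signature) (prog : list (clause B S))
    (HB : bilattice_axioms B) (HP : fitting_program prog) :
  exists zU zF zT : valuation B S,
    Fix_U prog aU zU /\ Fix_U prog aF zF /\ Fix_U prog aT zT /\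
    vle OrdK zU zF /\ vle OrdK zU zT.
Proof. exact (theorem5_sec B S prog HB HP). Qed.
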